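(* Let $0\le c<1$ and $0\le\delta\le q$ with $q>0$, and let $\mathbf A(\mu)=\begin{bmatrix}0&1-\delta\mu\\-c&1+c-q\mu\end{bmatrix}$. For any $k\ge1$ and any $\mu_1,\dots,\mu_k\in\big[0,\frac{(1-c)^2}{q-c\delta}\big]$, $$\Big\|\prod_{i=1}^k\mathbf A(\mu_i)\Big\|\le\frac{4}{1-c}.$$
   Context: $\|\cdot\|$ denotes the spectral norm; the product is an ordered matrix product. *)

(* Defs.v *)
From HB Require Import structures.
From mathcomp Require Import all_boot all_order all_algebra.
From mathcomp Require Import boolp classical_sets reals.
Set Implicit Arguments. Unset Strict Implicit. Unset Printing Implicit Defensive.
Import Order.TTheory GRing.Theory Num.Theory.
Local Open Scope ring_scope.
Local Open Scope classical_set_scope.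

Definition vnorm2 (R : realType) (n : nat) (x : 'cV[R]_n) : R :=
  Num.sqrt (\sum_(i < n) x i 0 ^+ 2).

Definition spec_norm (R : realType) (m n : nat) (A : 'M[R]_(m, n)) : R :=
  sup [set vnorm2 (A *m x) | x in [set x : 'cV[R]_n | vnorm2 x = 1]].

Definition Amat (R : realType) (c delta q mu : R) : 'M[R]_2 :=
  \matrix_(i < 2, j < 2)
    (if i == 0 :> nat then (if j == 0 :> nat then 0 else 1 - delta * mu)
     else (if j == 0 :> nat then - c else 1 + c - q * mu)).

(* Main.v *)
Require Import Defs.
From HB Require Import structures.
From mathcomp Require Import all_boot all_order all_algebra.
From mathcomp Require Import boolp classical_sets reals.
From mathcomp Require Import ring lra.
Import Order.TTheory GRing.Theory Num.Theory.
Local Open Scope ring_scope.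

Lemma psd2 (R : realType) (p q r x y : R) : 0 <= p -> 0 <= r -> q ^+ 2 <= p * r ->
  0 <= p * x ^+ 2 + 2 * q * x * y + r * y ^+ 2.
Proof.
move=> hp hr hd.
have [p0|pn0] := eqVneq p 0.
  have hq : q ^+ 2 <= 0 by rewrite p0 mul0r in hd.
  rewrite p0.
 have q0 : q = 0 by apply/eqP; rewrite -sqrf_eq0 eq_le hq sqr_ge0.
  by rewrite q0; nra.
have pp : 0 < p by rewrite lt_def pn0 hp.
have : 0 <= p * (p * x ^+ 2 + 2 * q * x * y + r * y ^+ 2).
  have -> : p * (p * x ^+ 2 + 2 * q * x * y + r * y ^+ 2) = (p*x+q*y)^+2 + (p*r - q^+2) * y^+2 by ring.
  by apply: addr_ge0; [apply: sqr_ge0 | apply: mulr_ge0; [rewrite subr_ge0|apply: sqr_ge0]].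
by rewrite pmulr_rge0.
Qed.

Lemma Mcontract (R : realType) (c a b z0 z1 : R) : 0 <= c -> c < 1 -> 0 <= b -> b <= a -> a <= 1 - c ->
  ((1-a)*z0 - a*c*z1)^+2 + (b*z0 + c*(1+b)*z1)^+2 <= z0^+2 + z1^+2.
Proof.
move=> c0 c1 b0 ba ac.
set N00 := 1 - (1-a)^+2 - b^+2.
set N11 := 1 - a^+2*c^+2 - c^+2*(1+b)^+2.
set N01 := a*c*(1-a) - b*c*(1+b).
have E : z0^+2 + z1^+2 - (((1-a)*z0 - a*c*z1)^+2 + (b*z0 + c*(1+b)*z1)^+2)
   = N00 * z0^+2 + 2 * N01 * z0 * z1 + N11 * z1 ^+2 by rewrite /N00 /N01 /N11; ring.
rewrite -subr_ge0 E; apply: psd2.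
- rewrite /N00; nra.
- have h1 : c^+2 * (a^+2 + (1+b)^+2) <= c^+2 * ((1-c)^+2 + (2-c)^+2).
    apply: ler_wpM2l; first nra. nra.
  have h2 : c^+2 * ((1-c)^+2 + (2-c)^+2) <= 1.
    rewrite -subr_ge0; (have -> : 1 - c^+2 * ((1-c)^+2 + (2-c)^+2) = (1-c)^+2 * (1 + 2*c - 2*c^+2) :> R by ring); apply: mulr_ge0; nra.
  rewrite /N11; nra.
- rewrite -subr_ge0.
  have -> : N00 * N11 - N01 ^+2 = (a-b)*(a+b+2*a*c^+2) + 2*a*((1+c^+2)*(1-c-a)) + 2*a*(c*(1-c)^+2) by rewrite /N00 /N01 /N11; ring.
  have a0 : 0 <= a by apply: le_trans ba.
  apply: addr_ge0; [apply: addr_ge0|].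
  + apply: mulr_ge0; [by rewrite subr_ge0| nra].
  + apply: mulr_ge0; [nra| apply: mulr_ge0; nra].
  + apply: mulr_ge0; [nra| apply: mulr_ge0; nra].
Qed.

Definition i1 : 'I_2 := @Ordinal 2 1 isT.
Definition Wf (R : realType) (c : R) (x : 'cV[R]_2) : R :=
  (x i1 ord0 - c * x ord0 ord0)^+2 + (x ord0 ord0 - x i1 ord0)^+2.

Arguments Wf {R}.
Lemma sum2 (R : realType) (f : 'I_2 -> R) : \sum_(i < 2) f i = f ord0 + f i1.
Proof. by rewrite big_ord_recr big_ord1 /=; congr (f _ + f _); apply: val_inj. Qed.

Lemma stepW (R : realType) (c delta q mu : R) (y : 'cV[R]_2)
  (hc0 : 0 <= c) (hc1 : c < 1) (hd0 : 0 <= delta) (hdq : delta <= q) (hq : 0 < q)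
  (hmu : 0 <= mu <= (1 - c) ^+ 2 / (q - c * delta)) :
  Wf c (Amat c delta q mu *m y) <= Wf c y.
Proof.
rewrite /Wf !mxE !sum2 !mxE /=.
set y0 := y ord0 ord0; set y1 := y i1 ord0.
have c1 : 1 - c != 0 by rewrite subr_eq0 eq_sym lt_eqF.
have qc : 0 < q - c * delta by nra.
case/andP: hmu => m0 m1.
set al := mu * (q - c * delta) / (1 - c).
set be := mu * (q - delta) / (1 - c).
set u := y1 - c * y0; set v := y0 - y1.
have cp : 0 < 1 - c by rewrite subr_gt0.
have E1 : - c * y0 + (1 + c - q * mu) * y1 - c * (0 * y0 + (1 - delta * mu) * y1) = (1-al)*u - al*c*v.
  by rewrite /u /v /al; field.
have E2 : 0 * y0 + (1 - delta * mu) * y1 - (- c * y0 + (1 + c - q * mu) * y1) = be*u + c*(1+be)*v.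
  by rewrite /u /v /be; field.
rewrite E1 E2; apply: Mcontract => //.
- by rewrite /be; apply: divr_ge0; [apply: mulr_ge0; rewrite ?subr_ge0 | apply: ltW].
- rewrite /be /al; apply: ler_wpM2r; [by rewrite invr_ge0 ltW| apply: ler_wpM2l => //; nra].
- rewrite /al ler_pdivrMr // -expr2.
  by rewrite ler_pdivlMr // in m1.
Qed.

Lemma prodW (R : realType) (c delta q : R)
  (hc0 : 0 <= c) (hc1 : c < 1) (hd0 : 0 <= delta) (hdq : delta <= q) (hq : 0 < q)
  (k : nat) (mu : 'I_k -> R)
  (hmu : forall i, 0 <= mu i <= (1 - c) ^+ 2 / (q - c * delta)) (x : 'cV[R]_2) :
  Wf c ((\prod_(i < k) Amat c delta q (mu i)) *m x) <= Wf c x.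
Proof.
move: x; apply: (big_ind (fun M : 'M[R]_2 => forall x, Wf c (M *m x) <= Wf c x)).
- by move=> x; rewrite mul1mx.
- move=> M1 M2 h1 h2 x; rewrite -mulmxE -mulmxA.
  exact: le_trans (h1 _) (h2 _).
- move=> i _ x; exact: stepW.
Qed.

Theorem mainTheorem9 (R : realType) (c delta q : R)
  (hc0 : 0 <= c) (hc1 : c < 1) (hd0 : 0 <= delta) (hdq : delta <= q) (hq : 0 < q)
  (k : nat) (hk : (1 <= k)%N) (mu : 'I_k -> R)
  (hmu : forall i, 0 <= mu i <= (1 - c) ^+ 2 / (q - c * delta)) :
  spec_norm (\prod_(i < k) Amat c delta q (mu i)) <= 4 / (1 - c).
Proof.
have cp : 0 < 1 - c by rewrite subr_gt0.
rewrite /spec_norm.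
set E := image _ _.
have ub : ubound E (4 / (1 - c)).
  move=> _ [x /= hx <-].
  set y := _ *m x.
  have hW := @prodW R c delta q hc0 hc1 hd0 hdq hq k mu hmu x; rewrite -/y in hW.
  move: hx; rewrite /vnorm2 !sum2 => hx.
  have Sx : x ord0 ord0 ^+ 2 + x i1 ord0 ^+ 2 = 1.
    by rewrite -[LHS]sqr_sqrtr ?hx ?expr1n // addr_ge0 // sqr_ge0.
  have Wx : Wf c x <= 4.
    rewrite /Wf.
    set x0 := x ord0 ord0; set x1 := x i1 ord0.
    have hc2 : c^+2 * x0^+2 <= x0^+2 by rewrite ler_piMl ?sqr_ge0 //; nra.
    have h0 : (x1 - c * x0)^+2 <= 2 * x1^+2 + 2 * (c^+2 * x0^+2).
      have := sqr_ge0 (x1 + c * x0); nra.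
    have h1 : (x1 - c * x0)^+2 <= 2 * x1^+2 + 2 * x0^+2 by nra.
    have h2 : (x0 - x1)^+2 <= 2 * x1^+2 + 2 * x0^+2.
      have := sqr_ge0 (x0 + x1); nra.
    rewrite -/x0 -/x1 in Sx; nra.
  have Wy : (1 - c)^+2 * (y ord0 ord0 ^+ 2 + y i1 ord0 ^+ 2) <= 4 * Wf c y.
    rewrite /Wf.
    set y0 := y ord0 ord0; set y1 := y i1 ord0.
    set u := y1 - c * y0; set v := y0 - y1.
    have -> : (1 - c)^+2 * (y0 ^+ 2 + y1 ^+ 2) = (u + v)^+2 + (u + c * v)^+2 by rewrite /u /v; ring.
    have h1 : (u+v)^+2 <= 2 * (u^+2 + v^+2) by have := sqr_ge0 (u - v); nra.
    have h2 : (u+c*v)^+2 <= 2 * (u^+2 + v^+2).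
      have : c^+2 * v^+2 <= v^+2 by rewrite ler_piMl ?sqr_ge0 //; nra.
      have := sqr_ge0 (u - c * v); nra.
    nra.
  have hS : y ord0 ord0 ^+ 2 + y i1 ord0 ^+ 2 <= (4 / (1 - c)) ^+ 2.
    rewrite expr_div_n ler_pdivlMr ?exprn_gt0 // mulrC; nra.
  have h4 : 0 <= 4 / (1 - c) by rewrite divr_ge0 // ltW.
  rewrite -[X in _ <= X]ger0_norm // -sqrtr_sqr /vnorm2 ?sum2 ler_sqrt ?sqr_ge0 //.
have [ne|ne] := pselect (exists z, E z).
  exact: ge_sup.
rewrite sup_out; first by rewrite divr_ge0 // ltW.
by case.
Qed.
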